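(* Let $N$ be a finite set, $C\subseteq N$ with $|C|\ge 2$ and $k\in\{1,\ldots,|C|-1\}$. Define $\tau\in\mathbb{R}^{\mathcal{S}}$ by $\tau(S)=(-1)^{|S|-k-1}\binom{|S|-2}{|S|-k-1}$ if $S\subseteq C$ and $|S|\ge k+1$, and $\tau(S)=0$ otherwise. Then for every $\eta\in\mathbb{R}^{\Upsilon}$, $$\sum_{S\in\mathcal{S}}\tau(S)\,c_\eta(S)=\sum_{a\in C}\ \sum_{B\subseteq N\setminus\{a\}:\,|B\cap C|\ge k}\eta(a|B),$$ so that the $k$-cluster inequality $\sum_{a\in C}\sum_{B\subseteq N\setminus\{a\}:|B\cap C|\ge k}\eta(a|B)\le|C|-k$ takes, in the characteristic-imset mode, the form $\sum_{S\in\mathcal{S}}\tau(S)c(S)\le |C|-k$.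
   Context: $\Upsilon=\{(a|B): a\in N,\ \emptyset\neq B\subseteq N\setminus\{a\}\}$; $\mathcal{S}=\{S\subseteq N:|S|\ge2\}$; for $\eta\in\mathbb{R}^{\Upsilon}$, $c_\eta\in\mathbb{R}^{\mathcal{S}}$ is defined by $c_\eta(S)=\sum_{a\in S}\sum_{B:\,S\setminus\{a\}\subseteq B\subseteq N\setminus\{a\}}\eta(a|B)$. *)

(* Defs.v *)
From HB Require Import structures.
From mathcomp Require Import all_boot all_order all_algebra.
Set Implicit Arguments. Unset Strict Implicit. Unset Printing Implicit Defensive.
Import Order.TTheory GRing.Theory Num.Theory.
Local Open Scope ring_scope.

(* The finite set N is the finType N; subsets are {set N}.
   eta : R^Upsilon is represented as a function eta a B; only its values on
   Upsilon = {(a|B) : a in N, B nonempty, B subset N\{a}} are ever used. *)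

Definition c_eta (N : finType) (R : nmodType) (eta : N -> {set N} -> R)
  (S : {set N}) : R :=
  \sum_(a in S) \sum_(B : {set N} | [&& B != set0, S :\ a \subset B
                                     & B \subset [set~ a]]) eta a B.

Definition tau (N : finType) (R : pzRingType) (C : {set N}) (k : nat)
  (S : {set N}) : R :=
  if (S \subset C) && (k.+1 <= #|S|)%N
  then (-1) ^+ (#|S| - k.+1) * ('C(#|S| - 2, #|S| - k.+1))%:R
  else 0.

(* Main.v *)
Require Import Defs.
From HB Require Import structures.
From mathcomp Require Import all_boot all_order all_algebra.
Import Order.TTheory GRing.Theory Num.Theory.
Local Open Scope ring_scope.

Section Num.
Variable R : pzRingType.

Lemma shift_sum (f : nat -> R) m :
  \sum_(t < m.+2) ('C(m.+1, t))%:R * f t =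
  \sum_(t < m.+1) ('C(m, t))%:R * f t + \sum_(t < m.+1) ('C(m, t))%:R * f t.+1.
Proof.
rewrite big_ord_recl /=.
under eq_bigr => i _ do rewrite /bump /= binS natrD mulrDl.
rewrite big_split /= addrA; congr (_ + _).
rewrite [in RHS]big_ord_recl /= !bin0; congr (_ + _).
rewrite big_ord_recr /= bin_small // mul0r addr0.
by apply: eq_bigr => i _; rewrite /bump.
Qed.

Definition bK (K t : nat) : R := (-1) ^+ (t - K) * ('C(t, K))%:R.

Lemma bK0S t : bK 0 t.+1 = - bK 0 t.
Proof. by rewrite /bK !subn0 !bin0 exprS mulN1r !mulNr. Qed.

Lemma bKSS K t : bK K.+1 t.+1 = bK K t - bK K.+1 t.
Proof.
rewrite /bK subSS binS natrD mulrDr addrC; congr (_ + _).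
case: (leqP t K) => h.
  by rewrite bin_small ?ltnS // !mulr0 oppr0.
by rewrite (_ : t - K = (t - K.+1).+1)%N ?exprS ?mulN1r ?mulNr // subnSK.
Qed.

Lemma E_lemma m K : \sum_(t < m.+1) ('C(m, t))%:R * bK K t = (m == K)%:R.
Proof.
elim: m K => [|m IH] K.
  by rewrite big_ord1 /bK bin0 bin0n mul1r; case: K => [|K]; rewrite ?mulr1 ?mulr0.
rewrite shift_sum IH; case: K => [|K].
  under eq_bigr => t _ do rewrite bK0S mulrN.
  by rewrite sumrN IH subrr.
under eq_bigr => t _ do rewrite bKSS mulrBr.
by rewrite sumrB !IH addrC subrK.
Qed.

Definition aK (k t : nat) : R :=
  if (k <= t)%N then (-1) ^+ (t - k) * ('C(t.-1, t - k))%:R else 0.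

Lemma F_lemma k m : (0 < k)%N ->
  \sum_(t < m.+1) ('C(m, t))%:R * aK k t = (k <= m)%:R.
Proof.
case: k => // K _.
elim: m => [|m IH].
  by rewrite big_ord1 /aK /= mulr0.
rewrite shift_sum IH.
have -> : \sum_(t < m.+1) ('C(m, t))%:R * aK K.+1 t.+1 =
          \sum_(t < m.+1) ('C(m, t))%:R * bK K t.
  apply: eq_bigr => t _; congr (_ * _); rewrite /aK /bK ltnS subSS /=.
  case: (leqP K t) => h; first by rewrite bin_sub.
  by rewrite bin_small ?mulr0.
rewrite E_lemma ltnS.
case: (ltngtP K m) => h //=.
- by rewrite addr0.
- by rewrite add0r.
- by rewrite add0r.
Qed.

Lemma sum_subsets (T : finType) (D : {set T}) (g : nat -> R) :
  \sum_(X : {set T} | X \subset D) g #|X| =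
  \sum_(t < #|D|.+1) ('C(#|D|, t))%:R * g t.
Proof.
rewrite (partition_big (fun X : {set T} => (inord #|X| : 'I_#|D|.+1)) xpredT) //=.
apply: eq_bigr => t _.
transitivity (\sum_(X in [set X : {set T} | X \subset D & #|X| == t]) g t).
  apply: eq_big => X.
    rewrite inE; case sXD: (X \subset D) => //=.
    by rewrite -val_eqE /= inordK // ltnS subset_leq_card.
  by move=> /andP [sXD /eqP <-]; rewrite inordK // ltnS subset_leq_card.
by rewrite sumr_const cards_draws mulr_natl.
Qed.
End Num.

Section Main.
Variables (N : finType) (R : realFieldType) (C : {set N}) (k : nat).
Hypothesis k_gt0 : (0 < k)%N.

Lemma coef_lemma (a : N) (B : {set N}) : a \notin B ->
  \sum_(S : {set N} | (a \in S) && (S :\ a \subset B)) tau R C k S =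
  ((a \in C) && (k <= #|B :&: C|)%N)%:R.
Proof.
move=> aB.
rewrite (reindex_onto (fun T => a |: T) (fun S => S :\ a)); last first.
  by move=> S /andP [aS _]; rewrite setD1K.
transitivity (\sum_(T : {set N} | T \subset B) tau R C k (a |: T)).
  apply: eq_bigl => T; rewrite setU11 /=.
  apply/andP/idP => [[h /eqP e] | h]; first by rewrite -e.
  have aT : a \notin T by apply/negP => /(subsetP h); apply/negP.
  by rewrite setU1K // h eqxx.
have -> : \sum_(T : {set N} | T \subset B) tau R C k (a |: T) =
          \sum_(T : {set N} | T \subset B) (if (a \in C) && (T \subset C) then aK R k #|T| else 0).
  apply: eq_bigr => T h.
  have aT : a \notin T by apply/negP => /(subsetP h); apply/negP.
  rewrite /tau /aK cardsU1 aT add1n subUset sub1set ltnS subSS.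
  rewrite (_ : (#|T|.+1 - 2 = #|T|.-1)%N); last by rewrite subSS subn1.
  by case: (_ && (T \subset C)).
case aC: (a \in C) => /=; last by rewrite big1.
rewrite -big_mkcondr.
have -> : \sum_(T : {set N} | (T \subset B) && (T \subset C)) aK R k #|T| =
          \sum_(T : {set N} | T \subset B :&: C) aK R k #|T|.
  by apply: eq_bigl => T; rewrite subsetI.
by rewrite sum_subsets F_lemma.
Qed.
End Main.

Theorem lemma11 (N : finType) (R : realFieldType) (C : {set N}) (k : nat) :
  (2 <= #|C|)%N -> (1 <= k <= #|C| - 1)%N ->
  forall eta : N -> {set N} -> R,
    \sum_(S : {set N} | (2 <= #|S|)%N) tau R C k S * c_eta eta S
    = \sum_(a in C) \sum_(B : {set N} | [&& B != set0, B \subset [set~ a]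
                                         & (k <= #|B :&: C|)%N]) eta a B.
Proof.
move=> _ /andP [k_gt0 _] eta.
have -> : \sum_(S : {set N} | (2 <= #|S|)%N) tau R C k S * c_eta eta S =
          \sum_(S : {set N}) tau R C k S * c_eta eta S.
  rewrite [RHS](bigID (fun S : {set N} => (2 <= #|S|)%N)) /= [X in _ = _ + X]big1 ?addr0 //.
  move=> S hS; rewrite /tau ifF ?mul0r //.
  apply/negbTE/negP => /andP [_ hk]; move/negP: hS; apply.
  by apply: leq_trans hk; rewrite ltnS.
have E1 : forall S, tau R C k S * c_eta eta S =
  \sum_a \sum_B (if (a \in S) && [&& B != set0, S :\ a \subset B & B \subset [set~ a]]
                 then tau R C k S * eta a B else 0).
  move=> S; rewrite /c_eta mulr_sumr big_mkcond; apply: eq_bigr => a _.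
  case: ifP => Ha /=; last by rewrite big1.
  by rewrite mulr_sumr big_mkcond.
under eq_bigr => S _ do rewrite E1.
rewrite exchange_big [RHS]big_mkcond; apply: eq_bigr => a _.
rewrite exchange_big.
have -> : (if a \in C then \sum_(B : {set N} | [&& B != set0, B \subset [set~ a]
                                         & (k <= #|B :&: C|)%N]) eta a B else 0) =
   \sum_B (if (a \in C) && [&& B != set0, B \subset [set~ a] & (k <= #|B :&: C|)%N]
           then eta a B else 0).
  case: ifP => aC /=; first by rewrite big_mkcond.
  by rewrite big1.
apply: eq_bigr => B _.
case: (boolP (B != set0)) => hB0 /=; last first.
  by rewrite andbF big1 // => S _; rewrite andbF.
case: (boolP (B \subset [set~ a])) => hBa /=; last first.
  by rewrite andbF big1 // => S _; rewrite !andbF.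
under eq_bigr => S _ do rewrite andbT.
rewrite -big_mkcond -mulr_suml.
have aB : a \notin B by apply/negP => /(subsetP hBa); rewrite !inE eqxx.
rewrite (@coef_lemma N R C k k_gt0 a B aB).
by case: (_ && _); rewrite ?mul1r ?mul0r.
Qed.
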